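(* Let $N_r\ge N_t\ge 2$, let $\mathbf{H}\in\mathbb{C}^{N_r\times N_t}$ have full column rank, let $\mathbf{H}=\mathbf{Q}\mathbf{L}$ be its thin QL decomposition, and let $\mathcal{X}\subset\mathbb{C}$ be a finite constellation. Fix $1\le\nu\le N_t-1$ and partition $$\mathbf{L}=\begin{bmatrix}\mathbf{P}&\mathbf{0}\\ \mathbf{R}&\mathbf{S}\end{bmatrix},$$ with $\mathbf{P}\in\mathbb{C}^{\nu\times\nu}$ and $\mathbf{S}\in\mathbb{C}^{(N_t-\nu)\times(N_t-\nu)}$. Define $$\boldsymbol{\Sigma}=\operatorname{diag}(\mathbf{S}^{-1}\mathbf{S}^{-\dagger})^{-1/2},\qquad \mathbf{W}_{\mathrm p}=\begin{bmatrix}\mathbf{I}_\nu&\mathbf{0}\\ \mathbf{0}&\boldsymbol{\Sigma}\mathbf{S}^{-1}\end{bmatrix}.$$ For $\mathbf{y}\in\mathbb{C}^{N_r}$ let $\tilde{\mathbf{y}}=\mathbf{Q}^\dagger\mathbf{y}$, and define $$\mathbf{x}_{\mathrm{ML}}=\arg\min_{\mathbf{x}\in\mathcal{X}^{N_t}}\|\tilde{\mathbf{y}}-\mathbf{L}\mathbf{x}\|,\qquad \mathbf{x}_{\mathrm{WLD}}=\arg\min_{\mathbf{x}\in\mathcal{X}^{N_t}}\|\mathbf{W}_{\mathrm p}(\tilde{\mathbf{y}}-\mathbf{L}\mathbf{x})\|.$$ Then $$\|\tilde{\mathbf{y}}-\mathbf{L}\mathbf{x}_{\mathrm{ML}}\|\le\|\tilde{\mathbf{y}}-\mathbf{L}\mathbf{x}_{\mathrm{WLD}}\|\le\kappa(\mathbf{W}_{\mathrm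 p})\,\|\tilde{\mathbf{y}}-\mathbf{L}\mathbf{x}_{\mathrm{ML}}\|$$ and $$\|\mathbf{W}_{\mathrm p}(\tilde{\mathbf{y}}-\mathbf{L}\mathbf{x}_{\mathrm{WLD}})\|\le\sigma_{\max}(\mathbf{W}_{\mathrm p})\,\|\tilde{\mathbf{y}}-\mathbf{L}\mathbf{x}_{\mathrm{ML}}\|,$$ where $\kappa(\mathbf{W}_{\mathrm p})=\sigma_{\max}(\mathbf{W}_{\mathrm p})/\sigma_{\min}(\mathbf{W}_{\mathrm p})$, and $\sigma_{\max}(\mathbf{W}_{\mathrm p}),\sigma_{\min}(\mathbf{W}_{\mathrm p})$ are the largest and smallest singular values of $\mathbf{W}_{\mathrm p}$.
   Context: The thin QL decomposition $\mathbf{H}=\mathbf{Q}\mathbf{L}$ means that $\mathbf{Q}\in\mathbb{C}^{N_r\times N_t}$ has orthonormal columns and $\mathbf{L}\in\mathbb{C}^{N_t\times N_t}$ is lower triangular with real positive diagonal entries. For a square matrix $\mathbf{A}$, $\operatorname{diag}(\mathbf{A})$ denotes the diagonal matrix having the same diagonal entries as $\mathbf{A}$. The superscript $\dagger$ denotes conjugate transpose, and $\|\cdot\|$ is the Euclidean norm. The argmins denote any minimizer. *)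

(* Defs.v *)
(* Complex scalars: an arbitrary numClosedFieldType C
   (e.g. complex numbers R[i] for R : realType). *)
From HB Require Import structures.
From mathcomp Require Import all_boot all_order all_algebra.
Set Implicit Arguments. Unset Strict Implicit. Unset Printing Implicit Defensive.
Import Order.TTheory GRing.Theory Num.Theory.
Local Open Scope ring_scope.

Section Defs.
Variable C : numClosedFieldType.

Definition ctmx m n (A : 'M[C]_(m, n)) : 'M[C]_(n, m) := (map_mx Num.conj A)^T.

Definition vnorm n (v : 'cV[C]_n) : C := sqrtC (\sum_i `|v i 0| ^+ 2).

Definition lower_tri_pos n (L : 'M[C]_n) : Prop :=
  (forall i j : 'I_n, (i < j)%N -> L i j = 0) /\ (forall i, 0 < L i i).

Definition thin_QL m n (H : 'M[C]_(m, n)) (Q : 'M[C]_(m, n)) (L : 'M[C]_n) : Prop :=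
  ctmx Q *m Q = 1%:M /\ lower_tri_pos L /\ H = Q *m L.

Definition singular_value n (A : 'M[C]_n) (s : C) : Prop :=
  0 <= s /\ eigenvalue (ctmx A *m A) (s ^+ 2).

Definition is_sigma_max n (A : 'M[C]_n) (s : C) : Prop :=
  singular_value A s /\ forall t, singular_value A t -> t <= s.

Definition is_sigma_min n (A : 'M[C]_n) (s : C) : Prop :=
  singular_value A s /\ forall t, singular_value A t -> s <= t.

Definition Sigma_of n (S : 'M[C]_n) : 'M[C]_n :=
  let M := invmx S *m ctmx (invmx S) in
  diag_mx (\row_i (sqrtC (M i i))^-1).

Definition Wp_of n1 n2 (S : 'M[C]_n2) : 'M[C]_(n1 + n2) :=
  block_mx 1%:M 0 0 (Sigma_of S *m invmx S).

Definition in_const n (X : seq C) (x : 'cV[C]_n) : Prop := forall i, x i 0 \in X.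

End Defs.

(* Main.v *)
Require Import Defs.
From mathcomp Require Import all_boot all_order all_algebra.
From mathcomp Require Import sesquilinear spectral.
Import Order.TTheory GRing.Theory Num.Theory Num.Def.
Local Open Scope ring_scope.



Section Aux.
Variable C : numClosedFieldType.

Lemma ctmx_mul m n p (A : 'M[C]_(m, n)) (B : 'M[C]_(n, p)) :
  ctmx (A *m B) = ctmx B *m ctmx A.
Proof. by rewrite /ctmx map_mxM trmx_mul. Qed.

Lemma ctmxK m n (A : 'M[C]_(m, n)) : ctmx (ctmx A) = A.
Proof.
rewrite /ctmx map_trmx trmxK -map_mx_comp; apply/matrixP=> i j; rewrite !mxE /=; exact: conjCK. Qed.

Lemma norm2E n (v : 'cV[C]_n) : \sum_i `|v i 0| ^+ 2 = (ctmx v *m v) 0 0.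
Proof. rewrite mxE; apply: eq_bigr => i _; rewrite !mxE; exact: normCKC. Qed.

Lemma ctmxE m n (A : 'M[C]_(m, n)) : ctmx A = (A ^t conjC)%sesqui.
Proof. by rewrite /ctmx map_trmx. Qed.

Lemma unitary_ct {n} {P : 'M[C]_n} : P \is unitarymx -> P *m ctmx P = 1%:M.
Proof. by rewrite ctmxE; move/unitarymxP. Qed.

Lemma unitary_ct' {n} {P : 'M[C]_n} : P \is unitarymx -> ctmx P *m P = 1%:M.
Proof.
move=> Pu; have Pi := unitarymx_unit Pu.
rewrite ctmxE -(invmx_unitary Pu); exact: mulVmx.
Qed.


Definition n2 {n} (v : 'cV[C]_n) := \sum_i `|v i 0| ^+ 2.

Lemma n2_ge0 {n} (v : 'cV[C]_n) : 0 <= n2 v.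
Proof. by apply: sumr_ge0 => i _; rewrite exprn_ge0. Qed.

Lemma sv_bound n (W : 'M[C]_n) smax smin :
  is_sigma_max W smax -> is_sigma_min W smin ->
  forall v : 'cV[C]_n, smin ^+ 2 * n2 v <= n2 (W *m v) /\ n2 (W *m v) <= smax ^+ 2 * n2 v.
Proof.
move=> [[smax0 _] hmax] [[smin0 _] hmin] v.
set B := ctmx W *m W.
have Bn : B \is normalmx.
  apply/normalmxP; rewrite -ctmxE.
  by have -> : ctmx B = B by rewrite /B ctmx_mul ctmxK.
move/orthomx_spectralP: Bn => BE.
set P := spectralmx B in BE; set d := spectral_diag B in BE.
have Pu : P \is unitarymx := spectral_unitarymx B.
have PPt := unitary_ct Pu; have PtP := unitary_ct' Pu.
rewrite (invmx_unitary Pu) -ctmxE in BE.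
have quad : forall w : 'cV[C]_n,
    n2 (W *m w) = \sum_i d 0 i * `|(P *m w) i 0| ^+ 2.
  move=> w; rewrite /n2 norm2E ctmx_mul -mulmxA (mulmxA (ctmx W)) -/B BE.
  have -> : ctmx w *m (ctmx P *m diag_mx d *m P *m w) =
            ctmx (P *m w) *m diag_mx d *m (P *m w).
    by rewrite ctmx_mul !mulmxA.
  rewrite mul_mx_diag mxE; apply: eq_bigr => i _; rewrite !mxE.
  set s := (\sum_j _); have -> : `|s| ^+ 2 = conjC s * s := normCKC s.
  by rewrite mulrAC mulrC.
have n2P : forall w : 'cV[C]_n, n2 (P *m w) = n2 w.
  by move=> w; rewrite /n2 !norm2E ctmx_mul mulmxA -(mulmxA _ _ P) PtP mulmx1.
have dprop : forall i, smin ^+ 2 <= d 0 i <= smax ^+ 2.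
  move=> i.
  have dge0 : 0 <= d 0 i.
    have : n2 (W *m ctmx (row i P)) = d 0 i.
      rewrite quad (bigD1 i) //= big1 ?addr0.
        suff -> : (P *m ctmx (row i P)) i 0 = 1 by rewrite normr1 expr1n mulr1.
        have -> : (P *m ctmx (row i P)) i 0 = (P *m ctmx P) i i.
          by rewrite !mxE; apply: eq_bigr => j _; rewrite !mxE.
        by rewrite PPt mxE eqxx.
      move=> k /negbTE kn.
      have -> : (P *m ctmx (row i P)) k 0 = (P *m ctmx P) k i.
        by rewrite !mxE; apply: eq_bigr => j _; rewrite !mxE.
      by rewrite PPt mxE kn normr0 expr0n mulr0.
    by move <-; exact: n2_ge0.
  have eig : eigenvalue B (d 0 i).
    apply/eigenvalueP; exists (row i P).
      rewrite -row_mul BE !mulmxA PPt mul1mx mul_diag_mx.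
      by apply/rowP => j; rewrite !mxE.
    apply/negP => /eqP r0.
    have : row i (P *m ctmx P) = 0 by rewrite row_mul r0 mul0mx.
    rewrite PPt => /rowP /(_ i); rewrite !mxE eqxx /= => /eqP.
    by rewrite oner_eq0.
  have sv : singular_value W (sqrtC (d 0 i)).
    by split; [rewrite sqrtC_ge0 | rewrite sqrtCK].
  have h1 := hmax _ sv; have h2 := hmin _ sv.
  rewrite -(sqrtCK (d 0 i)); apply/andP; split; apply: lerXn2r => //;
    by rewrite ?qualifE /= ?sqrtC_ge0.
have nP : forall i, 0 <= `|(P *m v) i 0| ^+ 2 by move=> i; rewrite exprn_ge0.
rewrite quad -(n2P v) /n2 !mulr_sumr; split; apply: ler_sum => i _;
  apply: ler_wpM2r => //; by case/andP: (dprop i).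
Qed.


Lemma sv_vbound n (W : 'M[C]_n) smax smin :
  is_sigma_max W smax -> is_sigma_min W smin ->
  forall v : 'cV[C]_n, smin * vnorm v <= vnorm (W *m v) /\ vnorm (W *m v) <= smax * vnorm v.
Proof.
move=> hM hm v; have [h1 h2] := sv_bound _ _ _ _ hM hm v.
have [[smax0 _] _] := hM; have [[smin0 _] _] := hm.
have nn : forall x : C, 0 <= x -> x \in Num.nneg by move=> x; rewrite qualifE.
have n0 := n2_ge0 v; have n1 := n2_ge0 (W *m v).
rewrite /vnorm -[smin](sqrCK smin0) -[smax](sqrCK smax0) -!sqrtCM ?nn ?exprn_ge0 //.
by split; rewrite ler_sqrtC ?nn ?mulr_ge0 ?exprn_ge0.
Qed.

Lemma smin_gt0 n (W : 'M[C]_n) smin : W \in unitmx -> is_sigma_min W smin -> 0 < smin.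
Proof.
move=> Wu [[smin0 eig] _]; rewrite lt_def smin0 andbT; apply/negP => /eqP s0.
move: eig; rewrite s0 expr0n /= => /eigenvalueP [u]; rewrite scale0r => uB u0.
have h : n2 (W *m ctmx u) = 0.
  by rewrite /n2 norm2E ctmx_mul ctmxK mulmxA -(mulmxA u) uB mul0mx mxE.
have Wz : W *m ctmx u = 0.
  apply/matrixP => i j; rewrite ord1 [RHS]mxE. apply/eqP; rewrite -normr_eq0 -sqrf_eq0; apply/eqP.
  move: h; rewrite /n2 => /psumr_eq0P; apply => // k _; exact: exprn_ge0.
have : ctmx u = 0 by rewrite -(mulKmx Wu (ctmx u)) Wz mulmx0.
move/(congr1 (@ctmx _ _ _)); rewrite ctmxK => u0'.
by move: u0; rewrite u0' /ctmx map_mx0 trmx0 eqxx.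
Qed.


Lemma S_unit {n1 n2} {L : 'M[C]_(n1 + n2)} : lower_tri_pos L -> drsubmx L \in unitmx.
Proof.
move=> [hz hp]; rewrite unitmxE det_trig.
  rewrite unitfE; apply: lt0r_neq0; apply: prodr_gt0 => i _; rewrite !mxE; exact: hp.
apply/is_trig_mxP => i j lt; rewrite !mxE; apply: hz; by rewrite /= ltn_add2l.
Qed.

Lemma Sigma_unit {n} (S : 'M[C]_n) : S \in unitmx -> Sigma_of S \in unitmx.
Proof.
move=> Su; rewrite unitmxE /Sigma_of det_diag unitfE; apply/prodf_neq0 => i _.
rewrite mxE invr_eq0 sqrtC_eq0; apply/negP => /eqP h.
set Si := invmx S in h.
have r0 : row i Si = 0.
  apply/rowP => j; rewrite !mxE; apply/eqP; rewrite -normr_eq0 -sqrf_eq0; apply/eqP.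
  move: h; rewrite mxE.
  have -> : \sum_j0 Si i j0 * ctmx Si j0 i = \sum_j0 `|Si i j0| ^+ 2.
    by apply: eq_bigr => k _; rewrite !mxE; symmetry; exact: normCK.
  move/psumr_eq0P; apply => // k _; exact: exprn_ge0.
have : row i (Si *m S) = 0 by rewrite row_mul r0 mul0mx.
rewrite mulVmx // => /rowP /(_ i); rewrite !mxE eqxx /= => /eqP.
by rewrite oner_eq0.
Qed.

Lemma Wp_unit n1 n2 (L : 'M[C]_(n1 + n2)) : lower_tri_pos L -> Wp_of n1 (drsubmx L) \in unitmx.
Proof.
move=> hL; have Su := S_unit hL.
rewrite unitmxE /Wp_of det_lblock det1 mul1r -unitmxE unitmx_mul unitmx_inv Su andbT.
exact: Sigma_unit.
Qed.

End Aux.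

(* N_t = nu + m with nu = n1 >= 1 and N_t - nu = n2 >= 1 (so N_t >= 2). *)
Theorem lemma1 (C : numClosedFieldType) (Nr n1 n2 : nat)
  (hn1 : (1 <= n1)%N) (hn2 : (1 <= n2)%N) (hNr : (n1 + n2 <= Nr)%N)
  (H : 'M[C]_(Nr, n1 + n2)) (hrank : \rank H = (n1 + n2)%N)
  (Q : 'M[C]_(Nr, n1 + n2)) (L : 'M[C]_(n1 + n2)) (hQL : thin_QL H Q L)
  (X : seq C) (y : 'cV[C]_Nr)
  (xML xWLD : 'cV[C]_(n1 + n2)) (smax smin : C) :
  let S := drsubmx L in
  let Wp := Wp_of n1 S in
  let yt := ctmx Q *m y in
  in_const X xML ->
  (forall x, in_const X x -> vnorm (yt - L *m xML) <= vnorm (yt - L *m x)) ->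
  in_const X xWLD ->
  (forall x, in_const X x ->
     vnorm (Wp *m (yt - L *m xWLD)) <= vnorm (Wp *m (yt - L *m x))) ->
  is_sigma_max Wp smax -> is_sigma_min Wp smin ->
  vnorm (yt - L *m xML) <= vnorm (yt - L *m xWLD) /\
  vnorm (yt - L *m xWLD) <= (smax / smin) * vnorm (yt - L *m xML) /\
  vnorm (Wp *m (yt - L *m xWLD)) <= smax * vnorm (yt - L *m xML).
Proof.
move=> S Wp yt hxML hML hxW hW hmax hmin.
have [_ [hL _]] := hQL.
have Wu : Wp \in unitmx by exact: Wp_unit hL.
have sp := smin_gt0 _ _ _ _ Wu hmin.
have [[smax0 _] _] := hmax.
have [_ hM2] := sv_vbound _ _ _ _ _ hmax hmin (yt - L *m xML).
have [hW1 _] := sv_vbound _ _ _ _ _ hmax hmin (yt - L *m xWLD).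
have hWM := hW xML hxML.
split; first exact: hML.
split; last exact: le_trans hWM hM2.
rewrite mulrAC ler_pdivlMr // mulrC.
exact: le_trans hW1 (le_trans hWM hM2).
Qed.
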